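(* Let $(\mathfrak{g},[\cdot,\cdot]_{\mathfrak{g}},\phi_{\mathfrak{g}})$ be a Hom-Lie algebra, $(V,\beta,\rho)$ a weakly involutive representation of it ($V$ finite-dimensional), and $T:V\to\mathfrak g$ a linear map satisfying $T\beta=\phi_{\mathfrak g}T$. If $T$ is an $\mathcal O$-operator associated to $(V,\beta,\rho)$, then $r=\overline T-\sigma(\overline T)$ is a solution of the classical Hom-Yang-Baxter equation $[r,r]=0$ in the Hom-Lie algebra $\mathfrak g\ltimes_{\rho^\circ}V^*$.
   Context: A Hom-Lie algebra $(\mathfrak{h},[\cdot,\cdot]_{\mathfrak{h}},\phi_{\mathfrak{h}})$: skew-symmetric bilinear bracket and linear map with $\phi_{\mathfrak h}[x,y]=[\phi_{\mathfrak h}x,\phi_{\mathfrak h}y]$ and $[\phi_{\mathfrak h}(x),[y,z]]+[\phi_{\mathfrak h}(y),[z,x]]+[\phi_{\mathfrak h}(z),[x,y]]=0$. A representation $(V,\beta,\rho)$ of $\mathfrak g$: $\beta\in\mathfrak{gl}(V)$, $\rho:\mathfrak g\to\mathfrak{gl}(V)$ linear with $\rho(\phi_{\mathfrak g}(x))\beta=\beta\rho(x)$ and $\rho([x,y]_{\mathfrak g})\beta=\rho(\phi_{\mathfrak g}(x))\rho(y)-\rho(\phi_{\mathfrak g}(y))\rho(x)$; it is weakly involutive if $\rho(\phi_{\mathfrak g}^2(x))=\rho(x)$ for all $x$. Define $\rho^\circ:\mathfrak g\to\mathfrak{gl}(V^* )$ by $\langle\rho^\circ(x)\xi,v\rangle=-\langle\xi,\rho(\phi_{\mathfrak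 g}(x))v\rangle$; when $\rho$ is weakly involutive, $(V^*,\beta^*,\rho^\circ)$ is a representation. The semidirect product $\mathfrak g\ltimes_{\rho^\circ}V^*$ is $\mathfrak g\oplus V^*$ with bracket $[(x,\xi),(y,\eta)]=([x,y]_{\mathfrak g},\rho^\circ(x)\eta-\rho^\circ(y)\xi)$ and twisting map $\phi_{\mathfrak g}\oplus\beta^*$. An $\mathcal O$-operator associated to $(V,\beta,\rho)$ is a linear map $T:V\to\mathfrak g$ with $T\beta=\phi_{\mathfrak g}T$ and $[T(u),T(v)]_{\mathfrak g}=T(\rho(T(u))v-\rho(T(v))u)$ for all $u,v\in V$. With $\{v_i\}$ a basis of $V$ and $\{v^i\}$ the dual basis, $\overline T=\sum_iv^i\otimes T(v_i)\in(\mathfrak g\oplus V^* )^{\otimes2}$, and $\sigma$ is the flip of tensor factors. For a Hom-Lie algebra $(\mathfrak h,[\cdot,\cdot],\phi)$ and $r=\sum_ix_i\otimes y_i\in\mathfrak h\otimes\mathfrak h$, $[r,r]=\sum_{i,j}\big([x_i,x_j]\otimes\phi(y_i)\otimes\phi(y_j)+\phi(x_i)\otimes[y_i,x_j]\otimes\phi(y_j)+\phi(x_i)\otimes\phi(x_j)\otimes[y_i,y_j]\big)$; the classical Hom-Yang-Baxter equation is $[r,r]=0$. *)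

(* Defs.v *)
From HB Require Import structures.
From mathcomp Require Import all_boot all_order all_algebra.
Set Implicit Arguments. Unset Strict Implicit. Unset Printing Implicit Defensive.
Import GRing.Theory.
Local Open Scope ring_scope.

Section HomLie.
Variable K : fieldType.

Definition is_HomLie (g : lmodType K) (br : g -> g -> g) (phi : g -> g) : Prop :=
  [/\ (forall (a : K) (x y z : g), br (a *: x + y) z = a *: br x z + br y z),
      (forall x y : g, br x y = - br y x),
      (forall (a : K) (x y : g), phi (a *: x + y) = a *: phi x + phi y),
      (forall x y : g, phi (br x y) = br (phi x) (phi y)) &
      (forall x y z : g,
         br (phi x) (br y z) + br (phi y) (br z x) + br (phi z) (br x y) = 0)].

Definition is_HomLie_rep (g : lmodType K) (br : g -> g -> g) (phi : g -> g)
    (V : vectType K) (beta : 'End(V)) (rho : g -> 'End(V)) : Prop :=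
  [/\ (forall (a : K) (x y : g), rho (a *: x + y) = a *: rho x + rho y),
      (forall x : g, (rho (phi x) \o beta = beta \o rho x)%VF) &
      (forall x y : g,
         (rho (br x y) \o beta = rho (phi x) \o rho y - rho (phi y) \o rho x)%VF)].

Definition weakly_involutive (g : lmodType K) (phi : g -> g)
    (V : vectType K) (rho : g -> 'End(V)) : Prop :=
  forall x : g, rho (phi (phi x)) = rho x.

Definition dualV (V : vectType K) := 'Hom(V, K^o).

Definition dual_map (V : vectType K) (beta : 'End(V)) (xi : dualV V) : dualV V :=
  (xi \o beta)%VF.

Definition rho_circ (g : lmodType K) (phi : g -> g) (V : vectType K)
    (rho : g -> 'End(V)) (x : g) (xi : dualV V) : dualV V :=
  - (xi \o rho (phi x))%VF.

Definition sd_br (g : lmodType K) (br : g -> g -> g) (phi : g -> g)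
    (V : vectType K) (rho : g -> 'End(V))
    (u w : (g * dualV V)%type) : (g * dualV V)%type :=
  (br u.1 w.1, rho_circ phi rho u.1 w.2 - rho_circ phi rho w.1 u.2).

Definition sd_phi (g : lmodType K) (phi : g -> g) (V : vectType K) (beta : 'End(V))
    (u : (g * dualV V)%type) : (g * dualV V)%type :=
  (phi u.1, dual_map beta u.2).

Definition is_O_operator (g : lmodType K) (br : g -> g -> g) (phi : g -> g)
    (V : vectType K) (beta : 'End(V)) (rho : g -> 'End(V)) (T : V -> g) : Prop :=
  [/\ (forall (a : K) (u v : V), T (a *: u + v) = a *: T u + T v),
      (forall v : V, T (beta v) = phi (T v)) &
      (forall u v : V, br (T u) (T v) = T (rho (T u) v - rho (T v) u))].

(* An element sum_k a_k (x) b_k of h (x) h is represented by the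
   list of its pure terms [:: (a_k, b_k)]; similarly for h (x) h (x) h.
   A 3-tensor is zero iff it is annihilated by every f1 (x) f2 (x) f3 with
   f_i linear functionals on h (canonical injective map into trilinear forms
   on h^*, valid for vector spaces over a field). *)
Definition tensor3_zero (h : lmodType K) (t : seq (h * h * h)) : Prop :=
  forall f1 f2 f3 : {linear h -> K^o},
    \sum_(u <- t) ((f1 u.1.1 : K) * (f2 u.1.2 : K) * (f3 u.2 : K)) = 0.

Definition hom_YB_bracket (h : Type) (br : h -> h -> h) (phi : h -> h)
    (r : seq (h * h)) : seq (h * h * h) :=
  flatten [seq [:: (br p.1 q.1, phi p.2, phi q.2);
                   (phi p.1, br p.2 q.1, phi q.2);
                   (phi p.1, phi q.1, br p.2 q.2)] | p <- r, q <- r].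

Definition dual_basis (V : vectType K) (n : nat) (e : n.-tuple V) (i : 'I_n)
    : dualV V := linfun (fun v : V => (coord e i v : K^o)).

(* r = Tbar - sigma(Tbar), Tbar = sum_i v^i (x) T(v_i), as a list of pure
   tensors in (g \oplus V^* ) (x) (g \oplus V^* );  - (T v_i (x) v^i) is
   written (- T v_i) (x) v^i. *)
Definition r_of_T (g : lmodType K) (V : vectType K) (n : nat) (e : n.-tuple V)
    (T : V -> g) : seq ((g * dualV V) * (g * dualV V)) :=
  [seq ((0, dual_basis e i), (T e`_i, 0)) | i : 'I_n] ++
  [seq ((- T e`_i, 0), (0, dual_basis e i)) | i : 'I_n].

End HomLie.

(* Main.v *)
Require Import Defs.
From HB Require Import structures.
From mathcomp Require Import all_boot all_order all_algebra.
From mathcomp Require Import ring.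
Local Open Scope ring_scope.
Import GRing.Theory.
Set Implicit Arguments. Unset Strict Implicit.
Section S.
Variable K : fieldType.
Variable V : vectType K.
Variables (n : nat) (e : n.-tuple V).
Hypothesis eb : basis_of fullv e.

Lemma lin_morph (c : V -> K) (hc : forall a x y, c (a *: x + y) = a * c x + c y) :
  (c 0 = 0) * (forall x y, c (x + y) = c x + c y) * (forall a x, c (a *: x) = a * c x).
Proof.
have c0 : c 0 = 0.
  have := hc 1 0 0; rewrite scaler0 addr0 mul1r.
  by move/(congr1 (fun t => t - c 0)); rewrite addrK subrr.
split; [split=> // x y|move=> a x].
  by have := hc 1 x y; rewrite scale1r mul1r.
by have := hc a x 0; rewrite addr0 c0 addr0.
Qed.

Lemma sum1 (c : V -> K) (hc : forall a x y, c (a *: x + y) = a * c x + c y) (u : V) :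
  \sum_i coord e i u * c e`_i = c u.
Proof.
have [[c0 cD] cZ] := lin_morph hc.
rewrite [in RHS](coord_basis eb (memvf u)).
rewrite (big_morph c cD c0); apply: eq_bigr => i _; by rewrite cZ.
Qed.

Lemma sum2 (G : V -> K) (R : V -> V)
  (hG : forall a x y, G (a *: x + y) = a * G x + G y)
  (hR : forall a x y, R (a *: x + y) = a *: R x + R y) (u : V) :
  \sum_(i < n) \sum_(j < n) coord e i (R e`_j) * G e`_i * coord e j u = G (R u).
Proof.
rewrite exchange_big /=.
transitivity (\sum_(j < n) coord e j u * G (R e`_j)).
  apply: eq_bigr => j _; rewrite -mulr_suml mulrC; congr (_ * _).
  exact: sum1.
apply: (sum1 _ (c := fun v => G (R v))) => a x y; by rewrite hR hG.
Qed.

Lemma sum2' (G : V -> K) (R : V -> V)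
  (hG : forall a x y, G (a *: x + y) = a * G x + G y)
  (hR : forall a x y, R (a *: x + y) = a *: R x + R y) (u : V) :
  \sum_(i < n) \sum_(j < n) coord e j (R e`_i) * G e`_j * coord e i u = G (R u).
Proof. by rewrite exchange_big; apply: sum2. Qed.

Lemma sum3 (H : V -> V -> K)
  (hl : forall y a x x', H (a *: x + x') y = a * H x y + H x' y)
  (hr : forall y a x x', H y (a *: x + x') = a * H y x + H y x') (u v : V) :
  \sum_(i < n) \sum_(j < n) H e`_i e`_j * coord e i u * coord e j v = H u v.
Proof.
transitivity (\sum_(i < n) coord e i u * H e`_i v).
  apply: eq_bigr => i _; rewrite -(sum1 (hr e`_i) v) mulr_sumr.
  by apply: eq_bigr => j _; ring.
exact: sum1 (hl v) u.
Qed.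

Lemma dsumD (A B : 'I_n -> 'I_n -> K) :
  \sum_(i < n) \sum_(j < n) (A i j + B i j) = \sum_(i < n) \sum_(j < n) A i j + \sum_(i < n) \sum_(j < n) B i j.
Proof. rewrite -big_split; apply: eq_bigr => i _; exact: big_split. Qed.

Lemma dsumN (A : 'I_n -> 'I_n -> K) :
  \sum_(i < n) \sum_(j < n) (- A i j) = - \sum_(i < n) \sum_(j < n) A i j.
Proof. rewrite -sumrN; apply: eq_bigr => i _; exact: sumrN. Qed.
End S.

Definition Xf (K : fieldType) (h : Type) (br : h -> h -> h) (phi : h -> h) (G : h * h * h -> K)
  (p q : h * h) : K :=
  G (br p.1 q.1, phi p.2, phi q.2)
     + G (phi p.1, br p.2 q.1, phi q.2) + G (phi p.1, phi q.1, br p.2 q.2).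

Lemma ybsum (K : fieldType) (h : Type) (br : h -> h -> h) (phi : h -> h) (r : seq (h * h))
  (G : h * h * h -> K) :
  \sum_(u <- hom_YB_bracket br phi r) G u =
  \sum_(p <- r) \sum_(q <- r) Xf br phi G p q.
Proof.
rewrite /hom_YB_bracket big_flatten /= big_allpairs_dep.
apply: eq_bigr => p _; apply: eq_bigr => q _.
by rewrite !big_cons big_nil addr0 addrA.
Qed.

Lemma sum_r (K : fieldType) (g : lmodType K) (V : vectType K) (n : nat) (e : n.-tuple V)
  (T : V -> g) (X : (g * dualV V) * (g * dualV V) -> (g * dualV V) * (g * dualV V) -> K) :
  \sum_(p <- r_of_T e T) \sum_(q <- r_of_T e T) X p q =
  \sum_(i < n) \sum_(j < n) (X ((0, dual_basis e i), (T e`_i, 0)) ((0, dual_basis e j), (T e`_j, 0))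
    + X ((0, dual_basis e i), (T e`_i, 0)) ((- T e`_j, 0), (0, dual_basis e j))
    + X ((- T e`_i, 0), (0, dual_basis e i)) ((0, dual_basis e j), (T e`_j, 0))
    + X ((- T e`_i, 0), (0, dual_basis e i)) ((- T e`_j, 0), (0, dual_basis e j))).
Proof.
rewrite /r_of_T big_cat !big_map /=.

rewrite -big_split /=; apply: eq_bigr => i _.
rewrite !big_cat !big_map /= -!big_split /=.
apply: eq_bigr => j _; ring.
Qed.

Lemma linE (K : fieldType) (U W : lmodType K) (c : U -> W)
  (hc : forall a x y, c (a *: x + y) = a *: c x + c y) :
  [/\ c 0 = 0, forall x y, c (x + y) = c x + c y, forall x, c (- x) = - c x
    & forall x y, c (x - y) = c x - c y].
Proof.
have c0 : c 0 = 0.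
  have := hc 1 0 0; rewrite scaler0 addr0 scale1r.
  by move/(congr1 (fun t => t - c 0)); rewrite addrK subrr.
have cD : forall x y, c (x + y) = c x + c y.
  by move=> x y; have := hc 1 x y; rewrite !scale1r.
have cN : forall x, c (- x) = - c x.
  move=> x; have := hc (-1) x 0; rewrite !addr0 c0 addr0 !scaleN1r //.
split=> // x y; by rewrite cD cN.
Qed.

Section Eval.
Variables (K : fieldType) (g : lmodType K) (V : vectType K) (n : nat) (e : n.-tuple V).
Hypothesis eb : basis_of fullv e.

Definition wf (f : {linear (g * dualV V)%type -> K^o}) : V :=
  \sum_(i < n) (f (0, dual_basis e i) : K) *: e`_i.

Lemma dbE i v : dual_basis e i v = coord e i v.
Proof. by rewrite /dual_basis lfunE. Qed.

Lemma psi_w (f : {linear (g * dualV V)%type -> K^o}) (xi : dualV V) :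
  f (0, xi) = xi (wf f).
Proof.
have -> : xi = \sum_(i < n) (xi e`_i : K) *: dual_basis e i.
  apply/lfunP => v; rewrite sum_lfunE.
  rewrite [in LHS](coord_basis eb (memvf v)) linear_sum /=.
  apply: eq_bigr => i _; rewrite scale_lfunE dbE linearZ /=.
  exact: mulrC.
have f0 : forall xi1 xi2, f (0, xi1 + xi2) = f (0, xi1) + f (0, xi2).
  move=> xi1 xi2; rewrite -raddfD; transitivity (f (0 + 0, xi1 + xi2)); first by rewrite addr0.
  by [].
have fZ : forall (a : K) xi1, f (0, a *: xi1) = a * f (0, xi1).
  move=> a xi1; rewrite -[a * _]/(a *: f (0, xi1)) -linearZ; transitivity (f (a *: 0, a *: xi1)); first by rewrite scaler0.
  reflexivity.
have sumf : forall F : 'I_n -> dualV V, f (0, \sum_(i < n) F i) = \sum_(i < n) f (0, F i).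
  move=> F; apply: (big_morph (fun xi => f (0, xi))) => //; exact: raddf0.
rewrite sumf sum_lfunE.
apply: eq_bigr => i _; rewrite fZ scale_lfunE dbE /wf coord_sum_free //.
exact: basis_free eb.
Qed.

Lemma fsplit (f : {linear (g * dualV V)%type -> K^o}) a b : f (a, b) = f (a, 0) + f (0, b).
Proof.
rewrite -raddfD; transitivity (f (a + 0, 0 + b)); first by rewrite addr0 add0r.
by [].
Qed.

Lemma evB (br : g -> g -> g) (phi : g -> g) (rho : g -> 'End(V))
  (f : {linear (g * dualV V)%type -> K^o}) x xi y eta :
  f (sd_br br phi rho (x, xi) (y, eta)) =
  f (br x y, 0) - eta (rho (phi x) (wf f)) + xi (rho (phi y) (wf f)).
Proof.
rewrite /sd_br /= fsplit psi_w /rho_circ add_lfunE !opp_lfunE !comp_lfunE.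
by rewrite opprK addrA.
Qed.

Lemma evP (phi : g -> g) (beta : 'End(V))
  (f : {linear (g * dualV V)%type -> K^o}) x xi :
  f (sd_phi phi beta (x, xi)) = f (phi x, 0) + xi (beta (wf f)).
Proof. by rewrite /sd_phi /= fsplit psi_w /dual_map comp_lfunE. Qed.
Lemma fL (f : {linear (g * dualV V)%type -> K^o}) (a : K) x y :
  f (a *: x + y, 0) = a * f (x, 0) + f (y, 0).
Proof.
rewrite -[a * _]/(a *: f (x, 0)) -linearP.
transitivity (f (a *: x + y, a *: 0 + 0)); first by rewrite scaler0 addr0.
by [].
Qed.

Lemma f00 (f : {linear (g * dualV V)%type -> K^o}) : f (0, 0) = 0.
Proof. exact: raddf0. Qed.

Lemma fN (f : {linear (g * dualV V)%type -> K^o}) x : f (- x, 0) = - f (x, 0).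
Proof.
rewrite -raddfN; transitivity (f (- x, - 0)); first by rewrite oppr0.
by [].
Qed.

Lemma fB (f : {linear (g * dualV V)%type -> K^o}) x y : f (x - y, 0) = f (x, 0) - f (y, 0).
Proof.
rewrite -raddfB; transitivity (f (x - y, 0 - 0)); first by rewrite subrr.
by [].
Qed.
End Eval.

Lemma evB' (K : fieldType) (g : lmodType K) (V : vectType K) (F : (g * dualV V)%type -> K) (w : V)
  (hF : forall a b, F (a, b) = F (a, 0) + b w)
  (br : g -> g -> g) (phi : g -> g) (rho : g -> 'End(V)) x xi y eta :
  F (sd_br br phi rho (x, xi) (y, eta)) =
  F (br x y, 0) - eta (rho (phi x) w) + xi (rho (phi y) w).
Proof.
rewrite /sd_br /= hF /rho_circ add_lfunE !opp_lfunE !comp_lfunE.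
by rewrite opprK addrA.
Qed.

Lemma evP' (K : fieldType) (g : lmodType K) (V : vectType K) (F : (g * dualV V)%type -> K) (w : V)
  (hF : forall a b, F (a, b) = F (a, 0) + b w)
  (phi : g -> g) (beta : 'End(V)) x xi :
  F (sd_phi phi beta (x, xi)) = F (phi x, 0) + xi (beta w).
Proof. by rewrite /sd_phi /= hF /dual_map comp_lfunE. Qed.


Lemma linK (K : fieldType) (U : lmodType K) (c : U -> K)
  (hc : forall a x y, c (a *: x + y) = a * c x + c y) :
  [/\ c 0 = 0, forall x, c (- x) = - c x & forall x y, c (x - y) = c x - c y].
Proof.
have c0 : c 0 = 0.
  have := hc 1 0 0; rewrite scaler0 addr0 mul1r.
  by move/(congr1 (fun t => t - c 0)); rewrite addrK subrr.
have cD : forall x y, c (x + y) = c x + c y.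
  by move=> x y; have := hc 1 x y; rewrite !scale1r mul1r.
have cN : forall x, c (- x) = - c x.
  move=> x; have := hc (-1) x 0; rewrite !addr0 c0 addr0 scaleN1r mulN1r //.
split=> // x y; by rewrite cD cN.
Qed.

Lemma core (K : fieldType) (g : lmodType K) (br : g -> g -> g)
    (phi : g -> g) (V : vectType K) (beta : 'End(V)) (rho : g -> 'End(V))
    (T : V -> g) (n : nat) (e : n.-tuple V)
    (F1 F2 F3 : (g * dualV V)%type -> K) (w1 w2 w3 : V) :
  is_HomLie br phi ->
  is_HomLie_rep br phi beta rho ->
  weakly_involutive phi rho ->
  (forall (a : K) (u v : V), T (a *: u + v) = a *: T u + T v) ->
  (forall v : V, T (beta v) = phi (T v)) ->
  basis_of fullv e ->
  is_O_operator br phi beta rho T ->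
  (forall a b, F1 (a, b) = F1 (a, 0) + b w1) ->
  (forall a b, F2 (a, b) = F2 (a, 0) + b w2) ->
  (forall a b, F3 (a, b) = F3 (a, 0) + b w3) ->
  (forall a x y, F1 (a *: x + y, 0) = a * F1 (x, 0) + F1 (y, 0)) ->
  (forall a x y, F2 (a *: x + y, 0) = a * F2 (x, 0) + F2 (y, 0)) ->
  (forall a x y, F3 (a *: x + y, 0) = a * F3 (x, 0) + F3 (y, 0)) ->
  \sum_(u <- hom_YB_bracket (sd_br br phi rho) (sd_phi phi beta) (r_of_T e T))
     F1 u.1.1 * F2 u.1.2 * F3 u.2 = 0.
Proof.
move=> [brL brS phiL phiM jac] [rhoL rhoB rhoM] hwi hT hTb eb [_ _ hO] h1 h2 h3 L1 L2 L3.
have [phi0 phiD phiN phiB] := linE phiL.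
have [rho0 rhoD rhoN rhoB'] := linE rhoL.
have [T0 TD TN TB] := linE hT.
have brLf : forall y, forall a x x', br (a *: x + x') y = a *: br x y + br x' y.
  by move=> y a x x'; apply: brL.
have brRf : forall y, forall a x x', br y (a *: x + x') = a *: br y x + br y x'.
  by move=> y a x x'; rewrite brS brL (brS y x) (brS y x') scalerN opprD.
have br0l : forall y, br 0 y = 0 by move=> y; have [] := linE (brLf y).
have brNl : forall x y, br (- x) y = - br x y by move=> x y; have [] := linE (brLf y).
have br0r : forall y, br y 0 = 0 by move=> y; have [] := linE (brRf y).
have brNr : forall x y, br y (- x) = - br y x by move=> x y; have [] := linE (brRf y).
have [F10 F1N F1B] := linK (c := fun x => F1 (x, 0)) L1.
have [F20 F2N F2B] := linK (c := fun x => F2 (x, 0)) L2.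
have [F30 F3N F3B] := linK (c := fun x => F3 (x, 0)) L3.
rewrite /= in F10 F1N F1B F20 F2N F2B F30 F3N F3B.
rewrite (ybsum _ _ _ (fun u => F1 u.1.1 * F2 u.1.2 * F3 u.2)).
rewrite (sum_r e T (Xf _ _ _)) /Xf /=.
transitivity (\sum_(i < n) \sum_(j < n) (
   - (coord e i (rho (phi (T e`_j)) w1) * F2 (phi (T e`_i), 0) * coord e j (beta w3))
 + coord e j (rho (phi (T e`_i)) w1) * F3 (phi (T e`_j), 0) * coord e i (beta w2)
 + F1 (br (T e`_i) (T e`_j), 0) * coord e i (beta w2) * coord e j (beta w3)
 - coord e j (rho (phi (T e`_i)) w2) * F3 (phi (T e`_j), 0) * coord e i (beta w1)
 - F2 (br (T e`_i) (T e`_j), 0) * coord e i (beta w1) * coord e j (beta w3)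
 + coord e i (rho (phi (T e`_j)) w2) * F1 (phi (T e`_i), 0) * coord e j (beta w3)
 + F3 (br (T e`_i) (T e`_j), 0) * coord e i (beta w1) * coord e j (beta w2)
 + coord e j (rho (phi (T e`_i)) w3) * F2 (phi (T e`_j), 0) * coord e i (beta w1)
 - coord e i (rho (phi (T e`_j)) w3) * F1 (phi (T e`_i), 0) * coord e j (beta w2))).
  apply: eq_bigr => i _; apply: eq_bigr => j _.
  rewrite !(evB' h1) !(evB' h2) !(evB' h3) !(evP' h1) !(evP' h2) !(evP' h3).
  rewrite ?br0l ?br0r ?brNl ?brNr ?phi0 ?phiN ?rho0 ?rhoN ?zero_lfunE ?opp_lfunE ?dbE.
  rewrite ?F10 ?F20 ?F30 ?F1N ?F2N ?F3N ?raddfN ?raddf0 /=.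
  ring.
rewrite !dsumD !dsumN.
have hG1 : forall a x y, F1 (phi (T (a *: x + y)), 0) = a * F1 (phi (T x), 0) + F1 (phi (T y), 0).
  by move=> a x y; rewrite hT phiL L1.
have hG2 : forall a x y, F2 (phi (T (a *: x + y)), 0) = a * F2 (phi (T x), 0) + F2 (phi (T y), 0).
  by move=> a x y; rewrite hT phiL L2.
have hG3 : forall a x y, F3 (phi (T (a *: x + y)), 0) = a * F3 (phi (T x), 0) + F3 (phi (T y), 0).
  by move=> a x y; rewrite hT phiL L3.
have hR : forall w a x y, rho (phi (T (a *: x + y))) w = a *: rho (phi (T x)) w + rho (phi (T y)) w.
  by move=> w a x y; rewrite hT phiL rhoL add_lfunE scale_lfunE.
have hH1l : forall y a x x', F1 (br (T (a *: x + x')) (T y), 0) = a * F1 (br (T x) (T y), 0) + F1 (br (T x') (T y), 0).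
  by move=> y a x x'; rewrite hT brL L1.
have hH1r : forall y a x x', F1 (br (T y) (T (a *: x + x')), 0) = a * F1 (br (T y) (T x), 0) + F1 (br (T y) (T x'), 0).
  by move=> y a x x'; rewrite hT brRf L1.
have hH2l : forall y a x x', F2 (br (T (a *: x + x')) (T y), 0) = a * F2 (br (T x) (T y), 0) + F2 (br (T x') (T y), 0).
  by move=> y a x x'; rewrite hT brL L2.
have hH2r : forall y a x x', F2 (br (T y) (T (a *: x + x')), 0) = a * F2 (br (T y) (T x), 0) + F2 (br (T y) (T x'), 0).
  by move=> y a x x'; rewrite hT brRf L2.
have hH3l : forall y a x x', F3 (br (T (a *: x + x')) (T y), 0) = a * F3 (br (T x) (T y), 0) + F3 (br (T x') (T y), 0).
  by move=> y a x x'; rewrite hT brL L3.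
have hH3r : forall y a x x', F3 (br (T y) (T (a *: x + x')), 0) = a * F3 (br (T y) (T x), 0) + F3 (br (T y) (T x'), 0).
  by move=> y a x x'; rewrite hT brRf L3.
rewrite (sum2 eb (G := fun v => F2 (phi (T v), 0)) (R := fun v => rho (phi (T v)) w1) hG2 (hR w1) (beta w3)).
rewrite (sum2' eb (G := fun v => F3 (phi (T v), 0)) (R := fun v => rho (phi (T v)) w1) hG3 (hR w1) (beta w2)).
rewrite (sum3 eb (H := fun x y => F1 (br (T x) (T y), 0)) hH1l hH1r (beta w2) (beta w3)).
rewrite (sum2' eb (G := fun v => F3 (phi (T v), 0)) (R := fun v => rho (phi (T v)) w2) hG3 (hR w2) (beta w1)).
rewrite (sum3 eb (H := fun x y => F2 (br (T x) (T y), 0)) hH2l hH2r (beta w1) (beta w3)).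
rewrite (sum2 eb (G := fun v => F1 (phi (T v), 0)) (R := fun v => rho (phi (T v)) w2) hG1 (hR w2) (beta w3)).
rewrite (sum3 eb (H := fun x y => F3 (br (T x) (T y), 0)) hH3l hH3r (beta w1) (beta w2)).
rewrite (sum2' eb (G := fun v => F2 (phi (T v), 0)) (R := fun v => rho (phi (T v)) w3) hG2 (hR w3) (beta w1)).
rewrite (sum2 eb (G := fun v => F1 (phi (T v), 0)) (R := fun v => rho (phi (T v)) w3) hG1 (hR w3) (beta w2)).
rewrite /= !hTb !hwi -!phiM !hO !TB !phiB ?F1B ?F2B ?F3B.
ring.
Qed.

Unset Implicit Arguments.
Set Strict Implicit.

Theorem theorem5p8 (K : fieldType) (g : lmodType K) (br : g -> g -> g)
    (phi : g -> g) (V : vectType K) (beta : 'End(V)) (rho : g -> 'End(V))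
    (T : V -> g) (n : nat) (e : n.-tuple V) :
  is_HomLie br phi ->
  is_HomLie_rep br phi beta rho ->
  weakly_involutive phi rho ->
  (forall (a : K) (u v : V), T (a *: u + v) = a *: T u + T v) ->
  (forall v : V, T (beta v) = phi (T v)) ->
  basis_of fullv e ->
  is_O_operator br phi beta rho T ->
  tensor3_zero
    (hom_YB_bracket (sd_br br phi rho) (sd_phi phi beta) (r_of_T e T)).
Proof.
move=> hL hR hwi hT hTb eb hO f1 f2 f3.
apply: (core (F1 := fun x => f1 x) (F2 := fun x => f2 x) (F3 := fun x => f3 x)
          (w1 := wf e f1) (w2 := wf e f2) (w3 := wf e f3) hL hR hwi hT hTb eb hO).
- by move=> a b; rewrite /= fsplit (psi_w eb).
- by move=> a b; rewrite /= fsplit (psi_w eb).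
- by move=> a b; rewrite /= fsplit (psi_w eb).
- by move=> a x y; rewrite /= fL.
- by move=> a x y; rewrite /= fL.
- by move=> a x y; rewrite /= fL.
Qed.
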